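(* Let $A$ and $B$ be persistence diagrams and let $c^*\ge 0$ be an optimal dilation for $(A,B)$. Then: (1) (Positivity) $\overline{d_D}(A,B)\ge 0$, and $\overline{d_D}(A,B)=0$ if and only if $B=c^*A$. (2) (Asymmetry) $\overline{d_D}(A,B)\ge c^*\cdot \overline{d_D}(B,A)$. (3) (Dilation invariance) For every $c>0$: $\overline{d_D}(cA,B)=\overline{d_D}(A,B)$ and $\overline{d_D}(A,cB)=c\cdot\overline{d_D}(A,B)$. (4) (Boundedness) $\overline{d_D}(A,B)\le \min\{d_\infty(A,B),\, d_\infty(D_0,B)\}$, where $D_0$ is the empty diagram.
   Context: A persistence diagram is a finite multiset of points $a=(a_x,a_y)\in\mathbb{R}^2$ with $0\le a_x<a_y<\infty$, together with the diagonal $\Delta=\{(x,x)\}$ taken with infinite multiplicity. The empty diagram $D_0$ consists only of $\Delta$. The bottleneck distance is $d_\infty(A,B)=\inf_\gamma\sup_{a}\|a-\gamma(a)\|_\infty$, the infimum over multi-bijections $\gamma$ between $A\cup\Delta$ and $B\cup\Delta$ (points may be matched to the diagonal; matching a point $a$ to $\Delta$ costs $(a_y-a_x)/2$). For $c>0$, the dilation is $cA=\{(ca_x,ca_y): a\in A\}$ (diagonal fixed), and by convention $0A=D_0$. The dilation-invariant bottleneck dissimilarity is $\overline{d_D}(A,B)=\inf_{c> 0} d_\infty(cA,B)$ (equivalently the infimum over $c\ge 0$). An optimal dilation is a number $c^*\ge 0$ with $d_\infty(c^*A,B)=\overline{d_D}(A,B)$; such a $c^*$ exists. *)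

(* Defs.v *)
From mathcomp Require Import all_boot all_order all_algebra.
From mathcomp Require Import classical_sets reals.
Set Implicit Arguments. Unset Strict Implicit. Unset Printing Implicit Defensive.
Import Order.TTheory GRing.Theory Num.Theory.
Local Open Scope ring_scope.
Local Open Scope classical_set_scope.

Section PD.
Variable R : realType.

(* A persistence diagram: finite multiset (list up to permutation) of
   off-diagonal points a = (a_x, a_y) with 0 <= a_x < a_y; the diagonal is implicit. *)
Definition is_diagram (A : seq (R * R)) : bool :=
  all (fun a => (0 <= a.1) && (a.1 < a.2)) A.

Definition linf (a b : R * R) : R := Num.max `|a.1 - b.1| `|a.2 - b.2|.

Definition diag_cost (a : R * R) : R := (a.2 - a.1) / 2.

(* A multi-bijection between A u Diag and B u Diag is determined (up to
   diagonal-diagonal pairs of cost 0) by a partial injection f from the points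
   of A to the points of B; points of A with f i = None and points of B not in
   the image of f are matched to the diagonal. *)
Definition is_matching (m n : nat) (f : 'I_m -> option 'I_n) : Prop :=
  forall i i' j, f i = Some j -> f i' = Some j -> i = i'.

Definition match_cost (A B : seq (R * R))
  (f : 'I_(size A) -> option 'I_(size B)) : R :=
  Num.max
    (\big[Num.max/0]_(i < size A)
        match f i with
        | Some j => linf (nth (0, 0) A i) (nth (0, 0) B j)
        | None => diag_cost (nth (0, 0) A i)
        end)
    (\big[Num.max/0]_(j < size B | [forall i, f i != Some j])
        diag_cost (nth (0, 0) B j)).

Definition bottleneck (A B : seq (R * R)) : R :=
  inf [set r | exists f : 'I_(size A) -> option 'I_(size B),
                 is_matching f /\ r = match_cost f].

Definition D0 : seq (R * R) := [::].

Definition dilate (c : R) (A : seq (R * R)) : seq (R * R) :=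
  if c == 0 then D0 else map (fun a => (c * a.1, c * a.2)) A.

Definition dbar (A B : seq (R * R)) : R :=
  inf [set r | exists c : R, 0 < c /\ r = bottleneck (dilate c A) B].

Definition optimal_dilation (A B : seq (R * R)) (c : R) : Prop :=
  0 <= c /\ bottleneck (dilate c A) B = dbar A B.

End PD.

(* Main.v *)
Require Import Defs.
From mathcomp Require Import all_boot all_order all_algebra.
From mathcomp Require Import classical_sets boolp reals.
From mathcomp Require Import lra.
Import Order.TTheory GRing.Theory Num.Theory.
Set Implicit Arguments. Unset Strict Implicit. Unset Printing Implicit Defensive.
Local Open Scope classical_set_scope.
Local Open Scope ring_scope.

Section Proofs.
Variable R : realType.
Implicit Types A B : seq (R * R).

Lemma cost_ge0 A B (f : 'I_(size A) -> option 'I_(size B)) : 0 <= match_cost f.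
Proof. by rewrite /match_cost le_max bigmax_ge_id. Qed.

Lemma none_matching m n : is_matching (fun _ : 'I_m => (None : option 'I_n)).
Proof. by []. Qed.

Lemma bn_lb A B (f : 'I_(size A) -> option 'I_(size B)) :
  is_matching f -> bottleneck A B <= match_cost f.
Proof.
move=> hf; apply: ge_inf; last by exists f.
by exists 0 => r [g [_ ->]]; exact: cost_ge0.
Qed.

Lemma bn_ge0 A B : 0 <= bottleneck A B.
Proof.
apply: lb_le_inf; first by exists (match_cost (fun _ : 'I_(size A) => (None : option 'I_(size B)))); exists (fun _ => None).
by move=> r [g [_ ->]]; exact: cost_ge0.
Qed.

Lemma bn_attained A B :
  exists2 f : 'I_(size A) -> option 'I_(size B), is_matching f & bottleneck A B = match_cost f.
Proof.
pose mb := fun (g : {ffun 'I_(size A) -> option 'I_(size B)}) =>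
  [forall i, forall i', forall j, ((g i == Some j) && (g i' == Some j)) ==> (i == i')].
pose g0 := [ffun i : 'I_(size A) => (None : option 'I_(size B))].
have mb0 : mb g0.
  by apply/forallP=> i; apply/forallP => i'; apply/forallP => j; rewrite ffunE.
pose F := fun (g : {ffun 'I_(size A) -> option 'I_(size B)}) => match_cost (fun i => g i).
have [g mbg gmin] := arg_minP F mb0.
have hg : is_matching (fun i => g i).
  move=> i i' j e1 e2; move: mbg => /forallP/(_ i)/forallP/(_ i')/forallP/(_ j).
  by rewrite e1 e2 !eqxx => /implyP /(_ isT) /eqP.
exists (fun i => g i) => //.
apply/le_anti; rewrite bn_lb ?andbT //.
apply: lb_le_inf; first by exists (F g), (fun i => g i).
move=> r [f [hf ->]].
have mbf : mb [ffun i => f i].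
  apply/forallP=> i; apply/forallP => i'; apply/forallP => j; rewrite !ffunE.
  by apply/implyP => /andP [/eqP e1 /eqP e2]; rewrite (hf _ _ _ e1 e2).
have := gmin _ mbf; rewrite /F.
by have -> : (fun i => [ffun i => f i] i) = f by apply/funext => i; rewrite ffunE.
Qed.


Lemma le_maxl (x y : R) : x <= Num.max x y. Proof. by rewrite le_max lexx. Qed.
Lemma le_maxr (x y : R) : y <= Num.max x y. Proof. by rewrite le_max lexx orbT. Qed.

Definition sc (k : R) (a : R * R) := (k * a.1, k * a.2).

Lemma linf_sc k a b : 0 <= k -> linf (sc k a) (sc k b) = k * linf a b.
Proof. by move=> hk; rewrite /linf /= -!mulrBr !normrM (ger0_norm hk) -maxr_pMr. Qed.

Lemma diag_sc k a : diag_cost (sc k a) = k * diag_cost a.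
Proof. by rewrite /diag_cost /= -mulrBr mulrA. Qed.

Lemma bn_transfer A B A' B' k (hk : 0 <= k)
  (eA : size A = size A') (eB : size B = size B')
  (HA : forall i, nth (0,0) A' i = sc k (nth (0,0) A i))
  (HB : forall i, nth (0,0) B' i = sc k (nth (0,0) B i)) :
  bottleneck A' B' <= k * bottleneck A B.
Proof.
have [f hf ->] := bn_attained A B.
pose f' := fun (i' : 'I_(size A')) =>
  omap (cast_ord eB) (f (cast_ord (esym eA) i')).
apply: le_trans (bn_lb (f := f') _) _.
  move=> i1 i2 j; rewrite /f'.
  case E1: (f _) => [j1|] //= [<-]; case E2: (f _) => [j2|] //= e.
  move: (cast_ord_inj (Some_inj e)) => e'.
  by subst j2; have := hf _ _ _ E1 E2 => /cast_ord_inj.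
have hX : 0 <= k * \big[Num.max/0]_(i < size A) match f i with
        | Some j => linf (nth (0, 0) A i) (nth (0, 0) B j)
        | None => diag_cost (nth (0, 0) A i)
        end by rewrite mulr_ge0 // bigmax_ge_id.
rewrite /match_cost. rewrite maxr_pMr // ge_max; apply/andP; split; apply: bigmax_le.
- by rewrite le_max hX.
- move=> i' _; apply: le_trans (le_maxl _ _); rewrite /f'.
  case E: (f _) => [j|] /=.
    rewrite HA HB linf_sc //; apply: ler_wpM2l => //.
    by apply: (bigmax_sup (cast_ord (esym eA) i')) => //; rewrite E.
  rewrite HA diag_sc; apply: ler_wpM2l => //.
  by apply: (bigmax_sup (cast_ord (esym eA) i')) => //; rewrite E.
- by rewrite le_max hX.
- move=> j' /forallP hj'; apply: le_trans (le_maxr _ _).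
  rewrite HB diag_sc; apply: ler_wpM2l => //.
  apply: (bigmax_sup (cast_ord (esym eB) j')) => //.
  apply/forallP => i; apply/eqP => E.
  have := hj' (cast_ord eA i); rewrite /f' cast_ordK E /= cast_ordKV.
  by rewrite eqxx.
Qed.

Lemma sc_inv k a : k != 0 -> sc k^-1 (sc k a) = a.
Proof. by move=> hk; case: a => x y; rewrite /sc /= !mulKf. Qed.

Lemma bn_scale A B A' B' k (hk : 0 < k)
  (eA : size A = size A') (eB : size B = size B')
  (HA : forall i, nth (0,0) A' i = sc k (nth (0,0) A i))
  (HB : forall i, nth (0,0) B' i = sc k (nth (0,0) B i)) :
  bottleneck A' B' = k * bottleneck A B.
Proof.
apply/le_anti; rewrite bn_transfer ?(ltW hk) //=.
have hk0 : k != 0 by rewrite gt_eqF.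
have := @bn_transfer A' B' A B k^-1 _ (esym eA) (esym eB).
rewrite invr_ge0 (ltW hk) => /(_ isT).
have H1 : forall i, nth (0, 0) A i = sc k^-1 (nth (0, 0) A' i) by move=> i; rewrite HA sc_inv.
have H2 : forall i, nth (0, 0) B i = sc k^-1 (nth (0, 0) B' i) by move=> i; rewrite HB sc_inv.
move=> /(_ H1 H2) h.
by have := ler_wpM2l (ltW hk) h; rewrite mulrA mulfV // mul1r.
Qed.

Lemma linfC (a b : R * R) : linf a b = linf b a.
Proof. by rewrite /linf distrC [`|a.2 - _|]distrC. Qed.

Lemma bn_sym_le A B : bottleneck B A <= bottleneck A B.
Proof.
have [f hf ->] := bn_attained A B.
pose g := fun j : 'I_(size B) => [pick i | f i == Some j].
have gP j i : (g j == Some i) = (f i == Some j).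
  rewrite /g; case: pickP => [i' /eqP fi'|none].
    apply/eqP/eqP => [[<-] //|fi]; congr Some; exact: hf fi' fi.
  by rewrite none.
apply: le_trans (bn_lb (f := g) _) _.
  move=> j1 j2 i /eqP; rewrite gP => /eqP e1 /eqP; rewrite gP => /eqP e2.
  by move: e1; rewrite e2 => -[].
rewrite /match_cost ge_max; apply/andP; split; apply: bigmax_le.
- by rewrite le_max bigmax_ge_id.
- move=> j _; case E: (g j) => [i|].
    have fi : f i = Some j by apply/eqP; rewrite -gP E.
    apply: le_trans (le_maxl _ _); rewrite linfC.
    by apply: (bigmax_sup i) => //; rewrite fi.
  apply: le_trans (le_maxr _ _); apply: (bigmax_sup j) => //.
  apply/forallP => i; apply/negP => /eqP fi.
  by move: E; have := gP j i; rewrite fi eqxx => /eqP ->.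
- by rewrite le_max bigmax_ge_id.
- move=> i /forallP hi; apply: le_trans (le_maxl _ _).
  apply: (bigmax_sup i) => //; case E: (f i) => [j|] //.
  by have := hi j; rewrite gP E eqxx.
Qed.

Lemma bn_sym A B : bottleneck A B = bottleneck B A.
Proof. by apply/le_anti; rewrite !bn_sym_le. Qed.


Lemma size_dilate c A : 0 < c -> size (dilate c A) = size A.
Proof. by move=> hc; rewrite /dilate gt_eqF // size_map. Qed.

Lemma nth_dilate c A i : 0 < c -> nth (0,0) (dilate c A) i = sc c (nth (0,0) A i).
Proof.
move=> hc; rewrite /dilate gt_eqF //; case: (ltnP i (size A)) => h.
  by rewrite (nth_map (0,0)).
by rewrite !nth_default ?size_map // /sc /= !mulr0.
Qed.

Lemma dilate_comp c c' A : 0 < c -> 0 < c' -> dilate c' (dilate c A) = dilate (c' * c) A.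
Proof.
move=> hc hc'; rewrite /dilate !gt_eqF ?mulr_gt0 // -map_comp.
by apply: eq_map => a /=; rewrite !mulrA.
Qed.

Lemma dilate1 A : dilate 1 A = A.
Proof.
rewrite /dilate oner_eq0 -[RHS]map_id; apply: eq_map => -[x y].
by rewrite /= !mul1r.
Qed.

Lemma diagram_dilate c A : 0 <= c -> is_diagram A -> is_diagram (dilate c A).
Proof.
rewrite /dilate; case: eqP => // /eqP hc0 hc; have hc' : 0 < c by rewrite lt_def hc0.
rewrite /is_diagram all_map => /allP h; apply/allP => a /h /andP [h1 h2] /=.
by rewrite mulr_ge0 // ltr_pM2l.
Qed.

Lemma diag_pos A i : is_diagram A -> (i < size A)%N -> 0 < diag_cost (nth (0,0) A i).
Proof.
move=> /(all_nthP (0,0)) h /h /andP [_ h2].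
by rewrite /diag_cost divr_gt0 // subr_gt0.
Qed.

Lemma linf_le0 (a b : R * R) : linf a b <= 0 -> a = b.
Proof.
rewrite /linf ge_max !normr_le0 !subr_eq0 => /andP [/eqP h1 /eqP h2].
by case: a b h1 h2 => x y [x' y'] /= -> ->.
Qed.

Lemma map_nth_ord A : map (fun j : 'I_(size A) => nth (0,0) A j) (enum 'I_(size A)) = A.
Proof. by rewrite (map_comp (nth (0,0) A) val) val_enum_ord -/(mkseq _ _) mkseq_nth. Qed.

Lemma cost0_perm A B (f : 'I_(size A) -> option 'I_(size B)) :
  is_diagram A -> is_diagram B -> is_matching f -> match_cost f <= 0 -> perm_eq B A.
Proof.
move=> hA hB hf; rewrite /match_cost ge_max => /andP [/bigmax_leP [_ h1] /bigmax_leP [_ h2]].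
have hsome : forall i, exists2 j, f i = Some j & nth (0,0) A i = nth (0,0) B j.
  move=> i; have := h1 i isT; case E: (f i) => [j|].
    by move/linf_le0 => e; exists j.
  by rewrite leNgt diag_pos.
have hcov : forall j, exists i, f i = Some j.
  move=> j; case: (boolP [forall i, f i != Some j]) => [h|].
    by have := h2 j h; rewrite leNgt diag_pos.
  by move/forallPn => [i /negPn /eqP e]; exists i.
pose h := fun o : option 'I_(size B) => if o is Some j then nth (0,0) B j else (0,0).
have hp : perm_eq (map f (enum 'I_(size A))) (map Some (enum 'I_(size B))).
  apply: uniq_perm.
  - rewrite map_inj_in_uniq ?enum_uniq // => i i' _ _ e.
    by have [j e1 _] := hsome i; apply: (hf _ _ j e1); rewrite -e.
  - by rewrite map_inj_uniq ?enum_uniq //; move=> x y [].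
  - case => [j|].
      rewrite map_f ?mem_enum //; have [i e] := hcov j.
      by rewrite -e map_f ?mem_enum.
    apply/mapP/mapP => -[x _ e].
      by have [j e1 _] := hsome x; rewrite e1 in e.
    by [].
have e1 : map h (map f (enum 'I_(size A))) = A.
  rewrite -[RHS]map_nth_ord; elim: (enum _) => //= x s ->.
  by have [j -> ->] := hsome x.
have e2 : map h (map Some (enum 'I_(size B))) = B.
  by rewrite -[RHS]map_nth_ord; elim: (enum _) => //= x s ->.
by have := perm_map h hp; rewrite e1 e2 perm_sym.
Qed.

Lemma perm_cost0 A B : perm_eq B A ->
  exists2 f : 'I_(size A) -> option 'I_(size B), is_matching f & match_cost f <= 0.
Proof.
move=> /(perm_iotaP (0,0)) [Is hIs eB].
have sIs : size Is = size A by rewrite (perm_size hIs) size_iota.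
have sB : size B = size Is by rewrite eB size_map.
have uIs : uniq Is by rewrite (perm_uniq hIs) iota_uniq.
have memIs i : (i \in Is) = (i < size A)%N by rewrite (perm_mem hIs) mem_iota.
pose f := fun i : 'I_(size A) => (insub (index (val i) Is) : option 'I_(size B)).
have fP : forall i j, f i = Some j -> val j = index (val i) Is.
  by move=> i j; rewrite /f; case: insubP => // u _ eu [<-].
have fS : forall i : 'I_(size A), exists j, f i = Some j.
  move=> i; rewrite /f; case: insubP => [u _ _|]; first by exists u.
  by rewrite sB index_mem memIs ltn_ord.
exists f.
  move=> i i' j /fP e1 /fP e2; apply: val_inj.
  have := congr1 (nth 0 Is) (etrans (esym e1) e2).
  by rewrite !nth_index ?memIs ?ltn_ord // => ->.
rewrite /match_cost ge_max; apply/andP; split; apply: bigmax_le => //.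
  move=> i _; have [j E] := fS i; rewrite E.
  have := fP _ _ E => ej.
  have nB : forall n, (n < size B)%N -> nth (0,0) B n = nth (0,0) A (nth 0 Is n).
    by move=> n; rewrite sB => hn; rewrite eB (nth_map 0).
  rewrite nB //.
  rewrite ej nth_index ?memIs ?ltn_ord //.
  by rewrite /linf !subrr normr0 /Num.max ltxx.
move=> j /forallP hj.
have jlt : (j < size Is)%N by rewrite -sB.
have ilt : (nth 0 Is j < size A)%N by rewrite -memIs mem_nth.
have := hj (Ordinal ilt); rewrite /f /= index_uniq //.
by rewrite (_ : insub (val j) = Some j) ?eqxx // valK.
Qed.


Lemma sc_comp a b (x : R * R) : sc a (sc b x) = sc (a * b) x.
Proof. by rewrite /sc /= !mulrA. Qed.

Lemma dbar_lb A B c : 0 < c -> dbar A B <= bottleneck (dilate c A) B.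
Proof.
move=> hc; apply: ge_inf; last by exists c.
by exists 0 => r [c' [_ ->]]; exact: bn_ge0.
Qed.

Lemma dbar_ge0 A B : 0 <= dbar A B.
Proof.
apply: lb_le_inf; first by exists (bottleneck (dilate 1 A) B), 1.
by move=> r [c' [_ ->]]; exact: bn_ge0.
Qed.

Lemma inf_scale (S : set R) c : 0 < c -> S !=set0 -> (forall x, S x -> 0 <= x) ->
  inf [set c * x | x in S] = c * inf S.
Proof.
move=> hc [x0 Sx0] hS.
have hne : [set c * x | x in S] !=set0 by exists (c * x0), x0.
have hlb : has_lbound S by exists 0.
have hlb' : has_lbound [set c * x | x in S].
  by exists 0 => y [x Sx <-]; apply: mulr_ge0; [exact: ltW | exact: hS].
have hc0 : c != 0 by rewrite gt_eqF.
apply/le_anti/andP; split; last first.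
  by apply: lb_le_inf => // y [x Sx <-]; rewrite ler_wpM2l ?(ltW hc) // ge_inf.
have : c^-1 * inf [set c * x | x in S] <= inf S.
  apply: lb_le_inf; first by exists x0.
  move=> x Sx; rewrite -(mulKf hc0 x); apply: ler_wpM2l; first by rewrite invr_ge0 ltW.
  by apply: ge_inf => //; exists x.
by move/(ler_wpM2l (ltW hc)); rewrite mulrA mulfV // mul1r.
Qed.

Lemma bn_rescale A B c c' : 0 < c -> 0 < c' ->
  bottleneck (dilate c' A) (dilate c B) = c * bottleneck (dilate (c' / c) A) B.
Proof.
move=> hc hc'; have hcc : 0 < c' / c by rewrite divr_gt0.
apply: bn_scale => //; rewrite ?size_dilate //.
  by move=> i; rewrite !nth_dilate // sc_comp mulrC divfK // gt_eqF.
by move=> i; rewrite nth_dilate.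
Qed.

End Proofs.

Theorem mainTheorem1 (R : realType) (A B : seq (R * R))
  (hA : is_diagram A) (hB : is_diagram B) (cs : R)
  (hopt : optimal_dilation A B cs) :
  (* (1) positivity *)
  (0 <= dbar A B /\ (dbar A B = 0 <-> perm_eq B (dilate cs A))) /\
  (* (2) asymmetry *)
  (cs * dbar B A <= dbar A B) /\
  (* (3) dilation invariance *)
  (forall c : R, 0 < c ->
     dbar (dilate c A) B = dbar A B /\ dbar A (dilate c B) = c * dbar A B) /\
  (* (4) boundedness *)
  (dbar A B <= Num.min (bottleneck A B) (bottleneck (D0 R) B)).
Proof.
have [hcs hopt'] := hopt.
split; [split; [exact: dbar_ge0|split]|split; [|split]].
- move=> h0; have [f hf ef] := bn_attained (dilate cs A) B.
  apply: (cost0_perm (f := f)) => //; first exact: diagram_dilate.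
  by rewrite -ef hopt' h0.
- move/perm_cost0 => [f hf hc]; rewrite -hopt'; apply/le_anti.
  by rewrite bn_ge0 andbT; exact: le_trans (bn_lb hf) hc.
- have [->|cs0] := eqVneq cs 0; first by rewrite mul0r dbar_ge0.
  have cpos : 0 < cs by rewrite lt_def cs0.
  rewrite -hopt'.
  have -> : bottleneck (dilate cs A) B = cs * bottleneck A (dilate cs^-1 B).
    apply: bn_scale => //; rewrite ?size_dilate ?invr_gt0 //.
      by move=> i; rewrite nth_dilate.
    by move=> i; rewrite nth_dilate ?invr_gt0 // sc_comp mulfV // /sc !mul1r; case: (nth _ _ _).
  rewrite bn_sym; apply: ler_wpM2l; first exact: ltW.
  by apply: dbar_lb; rewrite invr_gt0.
- move=> c hc; split.
    rewrite /dbar; congr inf; apply/seteqP; split => r [c' [hc' ->]].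
      by exists (c' * c); split; [rewrite mulr_gt0 | rewrite dilate_comp].
    exists (c' / c); split; first by rewrite divr_gt0.
    by rewrite dilate_comp ?divr_gt0 // divfK // gt_eqF.
  rewrite /dbar -inf_scale //; last first.
  + by move=> x [c' [_ ->]]; exact: bn_ge0.
  + by exists (bottleneck (dilate 1 A) B), 1.
  congr inf; apply/seteqP; split => r.
    move=> [c' [hc' ->]]; exists (bottleneck (dilate (c' / c) A) B).
      by exists (c' / c); split; rewrite ?divr_gt0.
    by rewrite bn_rescale.
  move=> [x [c'' [hc'' ->]] <-]; exists (c'' * c); split; first by rewrite mulr_gt0.
  by rewrite bn_rescale ?mulr_gt0 // mulfK // gt_eqF.
- rewrite le_min; apply/andP; split.
    by have := dbar_lb A B (@ltr01 R); rewrite dilate1.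
  pose T := \big[Num.max/0]_(j < size B) diag_cost (nth (0,0) B j).
  have hT : T <= bottleneck (D0 R) B.
    have [f hf ->] := bn_attained (D0 R) B; rewrite /match_cost.
    apply: le_trans (le_maxr _ _).
    rewrite [X in _ <= X](eq_bigl (fun _ => true)) //.
    by move=> j; apply/forallP => -[m hm].
  pose K := \big[Num.max/0]_(a <- A) diag_cost a.
  have hK0 : 0 <= K by exact: bigmax_ge_id.
  have hT0 : 0 <= T by exact: bigmax_ge_id.
  have hcK : forall c, 0 < c -> dbar A B <= Num.max (c * K) T.
    move=> c hc; apply: le_trans (dbar_lb A B hc) _.
    apply: le_trans (@bn_lb _ (dilate c A) B (fun _ => None) (@none_matching _ _)) _.
    rewrite /match_cost ge_max; apply/andP; split.
      apply: le_trans (le_maxl _ _); apply: bigmax_le; first by rewrite mulr_ge0 // ltW.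
      move=> i _; rewrite nth_dilate // diag_sc; apply: ler_wpM2l; first exact: ltW.
      apply: le_bigmax_seq => //; apply: mem_nth.
      by rewrite -(size_dilate A hc) ltn_ord.
    apply: le_trans (le_maxr _ _); apply: bigmax_le => // j _.
    exact: (bigmax_sup j).
  apply: le_trans hT; rewrite leNgt; apply/negP => hlt.
  set d := dbar A B in hlt hcK.
  have hK1 : 0 < K + 1 by lra.
  have cpos : 0 < (d - T) / (K + 1) by rewrite divr_gt0 // subr_gt0.
  have e : (d - T) / (K + 1) * (K + 1) = d - T by rewrite divfK // gt_eqF.
  have := hcK _ cpos; rewrite le_max; apply/negP; rewrite negb_or -!ltNge.
  apply/andP; split; last by [].
  set c := (d - T) / (K + 1) in cpos e *; nra.
Qed.
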